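(* For every $d<\omega$ and every $C\subseteq(2^2)^d$, $C$ is a wide right-$\omega$-comb if and only if no two-element subset of $C$ is an up-$1$-comb.
   Context: $2^2=\{0,1\}^2$; $(2^2)^d$ is the set of sequences of length $d$ with entries in $2^2$, $(2^2)^{<d}$ those of length $<d$, $\tau^\frown a$ concatenation; ''extends'' means has as initial segment. For $A,B\subseteq(2^2)^d$: $A$ is narrowly below $B$ if there are $\tau\in(2^2)^{<d}$, $i<2$ with all elements of $A$ extending $\tau^\frown(i,0)$ and all of $B$ extending $\tau^\frown(i,1)$; $A$ is narrowly to the left of $B$ if there are $\tau$, $j<2$ with all elements of $A$ extending $\tau^\frown(0,j)$ and all of $B$ extending $\tau^\frown(1,j)$; $A$ is widely to the left of $B$ if there is $\sigma\in(2^2)^{<d}$ with all elements of $A$ extending $\sigma^\frown(0,0)$ or $\sigma^\frown(0,1)$ and all of $B$ extending $\sigma^\frown(1,0)$ or $\sigma^\frown(1,1)$. For $n\le\omega$: up-$n$-combs form the smallest class of finite sets containing singletons and containing $A\cup B$ whenever $A,B$ are up-$n$-combs, $|A|\le n$ and $A$ is narrowly below $B$; right-$n$-combs likewise with ''narrowly to the left of''; wide right-$n$-combs form the smallest class containing singletons and containing $A\cup B$ whenever $A,B$ are right-$n$-combs, $|A|\le n$ and $A$ is widely to the left of $B$. *)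

(* Defs.v *)
From mathcomp Require Import all_boot.
Set Implicit Arguments. Unset Strict Implicit. Unset Printing Implicit Defensive.

(* 2^2 = {0,1}^2 is bool * bool (false = 0, true = 1);
   (2^2)^d is d.-tuple (bool * bool). *)
Definition node := (bool * bool)%type.
Definition seqd (d : nat) := (d.-tuple node)%type.

Definition extends d (x : seqd d) (s : seq node) : Prop := prefix s (val x).

Inductive cbound := Fin of nat | Omega.
Definition le_bound (k : nat) (n : cbound) : Prop :=
  match n with Fin m => k <= m | Omega => True end.

Definition narrowly_below d (A B : {set seqd d}) : Prop :=
  exists (tau : seq node) (i : bool), size tau < d /\
    (forall x, x \in A -> extends x (rcons tau (i, false))) /\
    (forall y, y \in B -> extends y (rcons tau (i, true))).

Definition narrowly_left d (A B : {set seqd d}) : Prop :=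
  exists (tau : seq node) (j : bool), size tau < d /\
    (forall x, x \in A -> extends x (rcons tau (false, j))) /\
    (forall y, y \in B -> extends y (rcons tau (true, j))).

Definition widely_left d (A B : {set seqd d}) : Prop :=
  exists (sigma : seq node), size sigma < d /\
    (forall x, x \in A -> extends x (rcons sigma (false, false))
                       \/ extends x (rcons sigma (false, true))) /\
    (forall y, y \in B -> extends y (rcons sigma (true, false))
                       \/ extends y (rcons sigma (true, true))).

Inductive up_comb d (n : cbound) : {set seqd d} -> Prop :=
| up_single (x : seqd d) : up_comb n [set x]
| up_union (A B : {set seqd d}) : up_comb n A -> up_comb n B ->
    le_bound #|A| n -> narrowly_below A B -> up_comb n (A :|: B).

Inductive right_comb d (n : cbound) : {set seqd d} -> Prop :=
| right_single (x : seqd d) : right_comb n [set x]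
| right_union (A B : {set seqd d}) : right_comb n A -> right_comb n B ->
    le_bound #|A| n -> narrowly_left A B -> right_comb n (A :|: B).

Inductive wide_right_comb d (n : cbound) : {set seqd d} -> Prop :=
| wide_single (x : seqd d) : wide_right_comb n [set x]
| wide_union (A B : {set seqd d}) : wide_right_comb n A -> wide_right_comb n B ->
    le_bound #|A| n -> widely_left A B -> wide_right_comb n (A :|: B).

(* Main.v *)
Require Import Defs.
From mathcomp Require Import all_boot.
Set Implicit Arguments. Unset Strict Implicit. Unset Printing Implicit Defensive.

Definition dn : node := (false, false).

Lemma ext_nth d (x : seqd d) s a : extends x (rcons s a) ->
  nth dn x (size s) = a /\ forall i, i < size s -> nth dn x i = nth dn s i.
Proof.
rewrite /extends prefixE size_rcons => /eqP E; split.
  by rewrite -(nth_take _ (ltnSn _)) E nth_rcons ltnn eqxx.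
by move=> i lti; rewrite -(nth_take _ (ltnW (leq_trans lti (leqnn _)) : i < (size s).+1)) E nth_rcons lti.
Qed.

Lemma mk_ext d (x : seqd d) s a : size s < d ->
  (forall i, i < size s -> nth dn x i = nth dn s i) -> nth dn x (size s) = a ->
  extends x (rcons s a).
Proof.
move=> ltd Hi Ha; rewrite /extends prefixE size_rcons; apply/eqP.
have Sz : size (take (size s).+1 x) = (size s).+1 by rewrite size_takel // size_tuple.
apply: (@eq_from_nth _ dn); first by rewrite Sz size_rcons.
rewrite Sz => i lti.
rewrite nth_take // nth_rcons; case: ltngtP => [/Hi //| |->]; last by [].
by move=> /(leq_trans lti); rewrite ltnn.
Qed.

Lemma sep d (x y : seqd d) s t a b c e : a != b -> c != e ->
  extends x (rcons s a) -> extends y (rcons s b) ->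
  extends x (rcons t c) -> extends y (rcons t e) -> a = c /\ b = e.
Proof.
move=> ab ce /ext_nth[xa xs] /ext_nth[yb ys] /ext_nth[xc xt] /ext_nth[ye yt].
case: (ltngtP (size s) (size t)) => [lt|lt|eq].
- by move: ab; rewrite -xa -yb xt // yt // eqxx.
- by move: ce; rewrite -xc -ye xs // ys // eqxx.
- by rewrite -xa -yb -xc -ye eq.
Qed.

Lemma up_nonempty d n (S : {set seqd d}) : up_comb n S -> exists x, x \in S.
Proof.
case=> [x|A B _ _ _ [tau [i [_ [HA HB]]]]]; first by exists x; rewrite inE.
Abort.

Lemma up_nonempty d n (S : {set seqd d}) : up_comb n S -> exists x, x \in S.
Proof.
elim=> [x|A B _ [x xA] _ _ _ _]; first by exists x; rewrite inE.
by exists x; rewrite inE xA.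
Qed.

Lemma up2 d (S : {set seqd d}) : #|S| = 2 -> up_comb (Fin 1) S ->
  exists x y tau i, [/\ x \in S, y \in S, extends x (rcons tau (i, false))
     & extends y (rcons tau (i, true))].
Proof.
move=> S2 u; case: u S2 => [x|A B uA uB _ [tau [i [_ [HA HB]]]]] S2.
  by rewrite cards1 in S2.
have [x xA] := up_nonempty uA; have [y yB] := up_nonempty uB.
by exists x, y, tau, i; rewrite !inE xA yB orbT; split => //; [apply HA|apply HB].
Qed.

Lemma fwd d (C : {set seqd d}) : wide_right_comb Omega C ->
  forall x y tau i, x \in C -> y \in C -> extends x (rcons tau (i, false)) ->
     extends y (rcons tau (i, true)) -> False.
Proof.
elim=> [z|A B _ IHA _ IHB _ [sg [_ [HA HB]]]] x y tau i.
  rewrite !inE => /eqP -> /eqP -> /ext_nth[+ _] /ext_nth[+ _] => ->.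
  by case.
rewrite !inE => /orP[xA|xB] /orP[yA|yB].
- exact: IHA xA yA.
- move=> ex ey.
  case: (HA x xA) => ex2; case: (HB y yB) => ey2;
  (have [] := sep _ _ ex ey ex2 ey2; [by rewrite xpair_eqE eqxx|by []|by case=> -> []]).
- move=> ex ey.
  case: (HB x xB) => ex2; case: (HA y yA) => ey2;
  (have [] := sep _ _ ex ey ex2 ey2; [by rewrite xpair_eqE eqxx|by []|by case=> -> []]).
- exact: IHB xB yB.
Qed.

Lemma pair_cond d (C : {set seqd d}) :
  (forall S : {set seqd d}, S \subset C -> #|S| = 2 -> ~ up_comb (Fin 1) S) ->
  forall y z k, y \in C -> z \in C -> (forall i, i < k -> nth dn y i = nth dn z i) ->
  nth dn y k != nth dn z k -> (nth dn y k).1 != (nth dn z k).1.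
Proof.
move=> H.
suff W : forall y z k, y \in C -> z \in C -> (forall i, i < k -> nth dn y i = nth dn z i) ->
  nth dn y k != nth dn z k -> (nth dn y k).2 = false -> (nth dn y k).1 != (nth dn z k).1.
  move=> y z k yC zC ag ne; case E: (nth dn y k).2; last exact: W.
  case E': (nth dn z k).2.
    move: ne E E'; case: (nth dn y k) => a b; case: (nth dn z k) => a' b' /= ne' Eb Eb'.
    by move: ne'; rewrite Eb Eb' xpair_eqE andbT.
  rewrite eq_sym; apply: W => //; first by move=> i /ag ->.
  by rewrite eq_sym.
move=> y z k yC zC ag ne E; apply/negP => /eqP E1.
have kd : k < d.
  rewrite ltnNge; apply/negP => dk; move: ne.
  by rewrite !nth_default ?size_tuple ?eqxx.
have yz : y != z by apply: contra ne => /eqP ->.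
have sz : size (take k y) = k by rewrite size_takel // size_tuple ltnW.
apply: (H [set y; z]).
- by apply/subsetP => w; rewrite !inE => /orP[] /eqP ->.
- by rewrite cards2 yz.
apply: up_union; [exact: up_single|exact: up_single|by rewrite cards1|].
exists (take k y), (nth dn y k).1; rewrite sz; split => //.
split=> w; rewrite inE => /eqP ->; apply: mk_ext; rewrite ?sz //.
- by move=> i ik; rewrite nth_take.
- by rewrite -E; case: (nth dn y k).
- by move=> i ik; rewrite nth_take // ag.
- move: ne E E1; case: (nth dn y k) => a b; case: (nth dn z k) => a' b' /= ne' Eb Ea.
  by move: ne'; rewrite Eb Ea xpair_eqE eqxx /=; case: b'.
Qed.

Lemma bwd d (C : {set seqd d}) : C != set0 ->
  (forall S : {set seqd d}, S \subset C -> #|S| = 2 -> ~ up_comb (Fin 1) S) ->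
  wide_right_comb Omega C.
Proof.
move: {2}#|C|.+1 (ltnSn #|C|) => n; elim: n C => // n IH C ltCn C0 H.
have PC := pair_cond H.
rewrite ltnS in ltCn.
have [x0 Cx0] := set0Pn _ C0.
have [->|neC] := eqVneq C [set x0]; first exact: wide_single.
have [y0 [Cy0 yx]] : exists y0, y0 \in C /\ y0 != x0.
  case: (boolP [exists y in C, y != x0]) => [/existsP[y /andP[]]|]; first by exists y.
  rewrite negb_exists => /forallP Hf; case/eqP: neC; apply/setP => w.
  rewrite inE; apply/idP/idP => [wC|/eqP->//].
  by move: (Hf w); rewrite wC /= negbK.
pose P k := [exists y in C, [exists z in C, nth dn y k != nth dn z k]].
have Pex : exists k, P k.
  case: (boolP [forall i : 'I_d, nth dn y0 i == nth dn x0 i]) => [/forallP Hf|].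
    case/eqP: yx; apply: val_inj; apply: (@eq_from_nth _ dn); rewrite ?size_tuple //.
    by move=> i id; exact: (eqP (Hf (Ordinal id))).
  rewrite negb_forall => /existsP[i ni]; exists i.
  by apply/existsP; exists y0; rewrite Cy0 /=; apply/existsP; exists x0; rewrite Cx0.
case: (ex_minnP Pex) => k /existsP[y1 /andP[Cy1 /existsP[z1 /andP[Cz1 ne1]]]] kmin.
have ag : forall y z i, y \in C -> z \in C -> i < k -> nth dn y i = nth dn z i.
  move=> y z i yC zC ik; apply/eqP; apply/negPn/negP => nyz.
  have : k <= i by apply: kmin; apply/existsP; exists y; rewrite yC /=; apply/existsP; exists z; rewrite zC.
  by rewrite leqNgt ik.
have kd : k < d.
  rewrite ltnNge; apply/negP => dk; move: ne1.
  by rewrite !nth_default ?size_tuple ?eqxx.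
have fne := PC _ _ _ Cy1 Cz1 (fun i ik => ag _ _ _ Cy1 Cz1 ik) ne1.
pose A := [set z in C | ~~ (nth dn z k).1].
pose B := [set z in C | (nth dn z k).1].
have CAB : C = A :|: B.
  by apply/setP => w; rewrite !inE; case: (nth dn w k).1; rewrite ?andbT ?andbF ?orbT ?orbF.
have [wA wB] : (exists w, w \in A) /\ (exists w, w \in B).
  move: fne; rewrite /A /B; case Ey: (nth dn y1 k).1; case Ez: (nth dn z1 k).1 => // _.
    by split; [exists z1 | exists y1]; rewrite inE ?Ey ?Ez ?Cy1 ?Cz1.
  by split; [exists y1 | exists z1]; rewrite inE ?Ey ?Ez ?Cy1 ?Cz1.
have subA : A \subset C by apply/subsetP => w; rewrite inE => /andP[].
have subB : B \subset C by apply/subsetP => w; rewrite inE => /andP[].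
have ltA : #|A| < n.
  apply: (leq_trans (proper_card _) ltCn); apply/properP; split => //.
  case: wB => w wB; exists w; first by move: wB; rewrite inE => /andP[].
  by move: wB; rewrite !inE => /andP[-> ->].
have ltB : #|B| < n.
  apply: (leq_trans (proper_card _) ltCn); apply/properP; split => //.
  case: wA => w wA; exists w; first by move: wA; rewrite inE => /andP[].
  by move: wA; rewrite !inE => /andP[-> /negbTE ->].
have sz : size (take k x0) = k by rewrite size_takel // size_tuple ltnW.
rewrite CAB; apply: wide_union => //.
- apply: IH => //; first by case: wA => w wA; apply/set0Pn; exists w.
  by move=> S SA; apply: H; apply: subset_trans subA.
- apply: IH => //; first by case: wB => w wB; apply/set0Pn; exists w.
  by move=> S SB; apply: H; apply: subset_trans subB.
exists (take k x0); rewrite sz; split => //; split.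
- move=> w; rewrite inE => /andP[wC wf].
  have Hi : forall i, i < size (take k x0) -> nth dn w i = nth dn (take k x0) i.
    by move=> i; rewrite sz => ik; rewrite nth_take // (ag _ _ _ wC Cx0 ik).
  move: wf; case E: (nth dn w k) => [a b] /= /negbTE af; subst a.
  by case: b E => E; [right | left]; apply: mk_ext; first [exact: Hi | by rewrite sz].
- move=> w; rewrite inE => /andP[wC wf].
  have Hi : forall i, i < size (take k x0) -> nth dn w i = nth dn (take k x0) i.
    by move=> i; rewrite sz => ik; rewrite nth_take // (ag _ _ _ wC Cx0 ik).
  move: wf; case E: (nth dn w k) => [[] b] //= _.
  by case: b E => E; [right | left]; apply: mk_ext; first [exact: Hi | by rewrite sz].
Qed.

Theorem lemma4p5 (d : nat) (C : {set seqd d}) :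
  C != set0 ->
  (wide_right_comb Omega C <->
   (forall S : {set seqd d}, S \subset C -> #|S| = 2 -> ~ up_comb (Fin 1) S)).
Proof.
move=> C0; split; last exact: bwd.
move=> W S SC S2 U.
have [x [y [tau [i [xS yS ex ey]]]]] := up2 S2 U.
exact: (fwd W (subsetP SC _ xS) (subsetP SC _ yS) ex ey).
Qed.
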